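(* Let $H\in(0,1)$, $K\in(0,1]$, $T>0$, and let $B^{H,K}$ be a bifractional Brownian motion. Then $B^{H,K}$ satisfies (C1) with $\gamma=HK$, and (C2) with $\gamma=HK$ and $\kappa=2^{(1-K)/2}$; more precisely, for every $\varphi\in\Psi$ and small $\delta>0$, $$\sup_{\varphi(\delta)\le s\le T-\delta}\sup_{0<h\le\delta}\Big|\frac{\sigma^2_{B^{H,K}}(s,s+h)}{2^{1-K}h^{2HK}}-1\Big|\le\frac{8}{L(\delta)^{2-2HK}},\qquad L(\delta)=\varphi(\delta)/\delta.$$ Consequently $B^{H,K}$ has Orey index $HK$.
   Context: A bifractional Brownian motion with parameters $H\in(0,1)$, $K\in(0,1]$ is a centered Gaussian process $(B^{H,K}_t)_{t\ge0}$ with covariance $R_{HK}(t,s)=2^{-K}\big((t^{2H}+s^{2H})^K-|t-s|^{2HK}\big)$. $\sigma_X^2(s,t)=\mathbb{E}[X(t)-X(s)]^2$. $\Psi$: continuous $\varphi\colon(0,T]\to[0,\infty)$ with $\varphi(h)\to0$, $L(h):=\varphi(h)/h\to\infty$, $hL(h)^3\to0$ as $h\downarrow0$. (C1): $\sigma_X(0,\delta)=O(\delta^\gamma)$. (C2): there is $\kappa>0$ such that for every $\varphi\in\Psi$, $\sup_{\varphi(\delta)\le t\le T-\delta}\sup_{0<h\le\delta}|\sigma_X(t,t+h)/(\kappa h^\gamma)-1|\to0$ as $\delta\downarrow0$. Orey index: for every $\varphi\in\Psi$, $\inf\{\beta>0\colon\lim_{h\downarrow0}\sup_{\varphi(h)\le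 s\le T-h}h^\beta/\sigma_X(s,s+h)=0\}$, $\inf\{\beta>0\colon\lim_{h\downarrow0}h^\beta/\sigma_X(0,h)=0\}$, $\sup\{\beta>0\colon\lim_{h\downarrow0}\inf_{\varphi(h)\le s\le T-h}h^\beta/\sigma_X(s,s+h)=\infty\}$, $\sup\{\beta>0\colon\lim_{h\downarrow0}h^\beta/\sigma_X(0,h)=\infty\}$ all coincide. *)

(* Defs.v *)
From Stdlib Require Import Reals.
Open Scope R_scope.

(* Real power x^y for x >= 0, with the convention 0^y = 0 (used only with y > 0).
   Stdlib's Rpower 0 y = 1, hence this wrapper. *)
Definition rpow (x y : R) : R := if Rle_dec x 0 then 0 else Rpower x y.

Definition R_HK (H K t s : R) : R :=
  rpow 2 (- K) * (rpow (rpow t (2*H) + rpow s (2*H)) K - rpow (Rabs (t - s)) (2*H*K)).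

(* sigma_X^2(s,t) = E[X(t)-X(s)]^2 = R(t,t) + R(s,s) - 2 R(s,t) for a centered
   process with covariance R. *)
Definition sigma2_of (Rc : R -> R -> R) (s t : R) : R := Rc t t + Rc s s - 2 * Rc s t.
Definition sigma_of (Rc : R -> R -> R) (s t : R) : R := sqrt (sigma2_of Rc s t).

Definition lim0 (f : R -> R) (l : R) : Prop :=
  forall eps, 0 < eps -> exists d, 0 < d /\ forall h, 0 < h < d -> Rabs (f h - l) < eps.
Definition lim0_infty (f : R -> R) : Prop :=
  forall M, exists d, 0 < d /\ forall h, 0 < h < d -> M < f h.

Definition in_Psi (T : R) (phi : R -> R) : Prop :=
  (forall x, 0 < x <= T -> forall eps, 0 < eps -> exists d, 0 < d /\
      forall y, 0 < y <= T -> Rabs (y - x) < d -> Rabs (phi y - phi x) < eps) /\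
  (forall x, 0 < x <= T -> 0 <= phi x) /\
  lim0 phi 0 /\
  lim0_infty (fun h => phi h / h) /\
  lim0 (fun h => h * (phi h / h) ^ 3) 0.

Definition cond_C1 (sig : R -> R -> R) (gamma : R) : Prop :=
  exists C d0, 0 < d0 /\ forall delta, 0 < delta < d0 ->
    Rabs (sig 0 delta) <= C * rpow delta gamma.

Definition C2_kappa (T : R) (sig : R -> R -> R) (gamma kappa : R) : Prop :=
  0 < kappa /\
  forall phi, in_Psi T phi ->
    forall eps, 0 < eps -> exists d0, 0 < d0 /\ forall delta, 0 < delta < d0 ->
      forall t h, phi delta <= t <= T - delta -> 0 < h <= delta ->
        Rabs (sig t (t + h) / (kappa * rpow h gamma) - 1) <= eps.

Definition is_glb (E : R -> Prop) (m : R) : Prop :=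
  (forall x, E x -> m <= x) /\ (forall b, (forall x, E x -> b <= x) -> b <= m).

Definition Orey_set1 (T : R) (sig : R -> R -> R) (phi : R -> R) (beta : R) : Prop :=
  0 < beta /\ forall eps, 0 < eps -> exists d, 0 < d /\ forall h, 0 < h < d ->
    forall s, phi h <= s <= T - h -> Rabs (rpow h beta / sig s (s + h)) <= eps.
Definition Orey_set2 (sig : R -> R -> R) (beta : R) : Prop :=
  0 < beta /\ lim0 (fun h => rpow h beta / sig 0 h) 0.
Definition Orey_set3 (T : R) (sig : R -> R -> R) (phi : R -> R) (beta : R) : Prop :=
  0 < beta /\ forall M, exists d, 0 < d /\ forall h, 0 < h < d ->
    forall s, phi h <= s <= T - h -> M <= rpow h beta / sig s (s + h).
Definition Orey_set4 (sig : R -> R -> R) (beta : R) : Prop :=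
  0 < beta /\ lim0_infty (fun h => rpow h beta / sig 0 h).

Definition has_Orey_index (T : R) (sig : R -> R -> R) (alpha : R) : Prop :=
  forall phi, in_Psi T phi ->
    is_glb (Orey_set1 T sig phi) alpha /\ is_glb (Orey_set2 sig) alpha /\
    is_lub (Orey_set3 T sig phi) alpha /\ is_lub (Orey_set4 sig) alpha.

(* Main.v *)
Require Import Defs.
From Stdlib Require Import Reals Lra Psatz.
Open Scope R_scope.

Lemma Rp_pos x y : 0 < Rpower x y.
Proof. unfold Rpower; apply exp_pos. Qed.

Lemma rpow_pos x y : 0 < x -> rpow x y = Rpower x y.
Proof. intros; unfold rpow; destruct (Rle_dec x 0); lra. Qed.

Lemma rpow_0 x y : x <= 0 -> rpow x y = 0.
Proof. intros; unfold rpow; destruct (Rle_dec x 0); lra. Qed.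

Lemma Rpower_1b r : Rpower 1 r = 1.
Proof. unfold Rpower; rewrite ln_1, Rmult_0_r; apply exp_0. Qed.

Lemma Rp_decr p a b : p <= 0 -> 0 < a <= b -> Rpower b p <= Rpower a p.
Proof.
  intros Hp Hab. replace p with (- (- p)) by ring. rewrite (Rpower_Ropp b (-p)), (Rpower_Ropp a (-p)).
  apply Rinv_le_contravar. apply Rp_pos. apply Rle_Rpower_l; lra.
Qed.

Lemma Rp_le1 p v : p <= 0 -> 1 <= v -> Rpower v p <= 1.
Proof. intros. rewrite <- (Rpower_O v) by lra. apply Rle_Rpower; lra. Qed.

Lemma Rp_ge1 p v : 0 <= p -> 1 <= v -> 1 <= Rpower v p.
Proof. intros. rewrite <- (Rpower_O v) by lra. apply Rle_Rpower; lra. Qed.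

Lemma bern r v : 0 <= r <= 1 -> 1 <= v -> Rpower v r <= 1 + r*(v-1).
Proof.
  intros Hr Hv. destruct (Req_dec v 1) as [->|Hv1].
  - rewrite Rpower_1b; lra.
  - destruct (MVT_cor2 (fun v => Rpower v r - r*v) (fun c => r*Rpower c (r-1) - r*1) 1 v)
      as [c [Hc1 Hc2]]; [lra| |].
    + intros c Hc. apply derivable_pt_lim_minus. apply derivable_pt_lim_power; lra.
      apply derivable_pt_lim_scal. apply derivable_pt_lim_id.
    + rewrite Rpower_1b in Hc1.
      assert (Rpower c (r-1) <= 1) by (apply Rp_le1; lra).
      assert (r * Rpower c (r - 1) - r * 1 <= 0) by nra.
      nra.
Qed.

Lemma bern_neg K v : 0 < K <= 1 -> 1 <= v -> 1 - (1-K)*(v-1) <= Rpower v (K-1).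
Proof.
  intros HK Hv. replace (K-1) with (-(1-K)) by ring. rewrite Rpower_Ropp.
  assert (HP := bern (1-K) v ltac:(lra) Hv).
  assert (HP0 := Rp_pos v (1-K)). set (P := Rpower v (1-K)) in *.
  apply (Rmult_le_reg_r P); auto. rewrite Rinv_l by lra.
  destruct (Rle_dec (1 - (1-K)*(v-1)) 0).
  - assert ((1 - (1-K)*(v-1)) * P <= 0) by nra. lra.
  - assert ((1 - (1-K)*(v-1)) * P <= (1 - (1-K)*(v-1)) * (1 + (1-K)*(v-1))) by (apply Rmult_le_compat_l; lra).
    assert ((1 - (1-K)*(v-1)) * (1 + (1-K)*(v-1)) = 1 - ((1-K)*(v-1))^2) by ring.
    assert (0 <= ((1-K)*(v-1))^2) by apply pow2_ge_0. lra.
Qed.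

Lemma Rpower_inv2 z : Rpower (/2) z = Rpower 2 (-z).
Proof. unfold Rpower. rewrite ln_Rinv by lra. f_equal. ring. Qed.

Lemma two_pow1 : Rpower 2 1 = 2.
Proof. apply Rpower_1; lra. Qed.

Lemma qlem K u : 0 < K <= 1 -> 1 <= u ->
  0 <= Rpower 2 (1-K) * Rpower (1+u) K - Rpower u K - 1 <= (u-1)^2/4.
Proof.
  intros HK Hu.
  set (c := Rpower 2 (1-K)).
  assert (Hq1 : c * Rpower (1+1) K - Rpower 1 K - 1 = 0).
  { unfold c. rewrite Rpower_1b. replace (1+1) with 2 by ring.
    rewrite <- Rpower_plus. replace (1-K+K) with 1 by ring. rewrite two_pow1. ring. }
  destruct (Req_dec u 1) as [->|Hu1].
  - rewrite Hq1. lra.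
  - destruct (MVT_cor2 (fun v => c*Rpower (1+v) K - Rpower v K - 1)
       (fun v => c*(K*Rpower (1+v) (K-1)) - K*Rpower v (K-1) - 0) 1 u) as [x [Hx1 Hx2]]; [lra| |].
    + intros v Hv. apply derivable_pt_lim_minus. apply derivable_pt_lim_minus.
      apply derivable_pt_lim_scal.
      replace (K*Rpower (1+v) (K-1)) with ((K*Rpower (1+v)(K-1))*(0+1)) by ring.
      apply (derivable_pt_lim_comp (fun v => 1+v) (fun v => Rpower v K) v (0+1)).
      apply derivable_pt_lim_plus. apply derivable_pt_lim_const. apply derivable_pt_lim_id.
      apply derivable_pt_lim_power; lra.
      apply derivable_pt_lim_power; lra.
      apply derivable_pt_lim_const.
    + rewrite Hq1 in Hx1.
      assert (HW : c * Rpower (1+x) (K-1) = Rpower ((/2)*(1+x)) (K-1)).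
      { rewrite <- Rpower_mult_distr by lra. rewrite Rpower_inv2. unfold c. f_equal. f_equal. ring. }
      assert (W1 : Rpower ((/2)*(1+x)) (K-1) <= 1) by (apply Rp_le1; lra).
      assert (W2 : Rpower x (K-1) <= Rpower ((/2)*(1+x)) (K-1)) by (apply Rp_decr; lra).
      assert (W3 := bern_neg K x HK ltac:(lra)).
      assert (D1 : c * (K * Rpower (1 + x) (K - 1)) - K * Rpower x (K - 1) - 0
                  = K * (Rpower ((/2)*(1+x)) (K-1) - Rpower x (K-1))) by (rewrite <- HW; ring).
      rewrite D1 in Hx1.
      set (W := Rpower ((/2)*(1+x)) (K-1)) in *. set (X := Rpower x (K-1)) in *.
      assert (0 <= K*(W - X)) by (apply Rmult_le_pos; lra).
      assert (K*(W-X) <= K*((1-K)*(x-1))) by (apply Rmult_le_compat_l; lra).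
      assert (K*(1-K) <= /4) by (assert (0 <= (K-/2)^2) by apply pow2_ge_0; assert ((K-/2)^2 = /4 - K*(1-K)) by field; lra).
      assert (K*((1-K)*(x-1)) <= /4 * (u-1)).
      { rewrite <- Rmult_assoc. apply Rmult_le_compat; nra. }
      split.
      * assert (0 <= K*(W-X)*(u-1)) by (apply Rmult_le_pos; lra). lra.
      * assert (K*(W-X)*(u-1) <= /4*(u-1)*(u-1)) by (apply Rmult_le_compat_r; lra). lra.
Qed.

Lemma Rdiag H K t : 0 < t -> R_HK H K t t = Rpower t (2*H*K).
Proof.
  intros Ht. unfold R_HK. rewrite Rminus_diag, Rabs_R0, (rpow_0 0) by lra.
  rewrite (rpow_pos t) by lra. rewrite (rpow_pos 2) by lra.
  rewrite rpow_pos by (pose proof (Rp_pos t (2*H)); lra).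
  replace (Rpower t (2*H) + Rpower t (2*H)) with (2 * Rpower t (2*H)) by ring.
  rewrite <- Rpower_mult_distr by (try apply Rp_pos; lra).
  rewrite Rpower_mult. rewrite Rminus_0_r, <- Rmult_assoc, <- Rpower_plus.
  replace (-K+K) with 0 by ring. rewrite Rpower_O by lra. ring.
Qed.

Lemma R00 H K : R_HK H K 0 0 = 0.
Proof.
  unfold R_HK. rewrite Rminus_diag, Rabs_R0, !(rpow_0 0) by lra.
  rewrite Rplus_0_r, (rpow_0 0) by lra. ring.
Qed.

Lemma R0t H K t : 0 < t -> R_HK H K 0 t = 0.
Proof.
  intros Ht. unfold R_HK. rewrite (rpow_0 0) by lra. rewrite Rplus_0_l.
  rewrite (rpow_pos t) by lra.
  rewrite (rpow_pos (Rpower t (2*H))) by apply Rp_pos.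
  replace (Rabs (0 - t)) with t by (rewrite Rabs_left by lra; ring).
  rewrite (rpow_pos t) by lra. rewrite Rpower_mult. ring.
Qed.

Lemma sig2_0 H K h : 0 < h -> sigma2_of (R_HK H K) 0 h = Rpower h (2*H*K).
Proof. intros. unfold sigma2_of. rewrite Rdiag, R00, R0t by lra. ring. Qed.

Lemma sig2_main H K s h : 0 < H < 1 -> 0 < K <= 1 -> 0 < s -> 0 < h <= s ->
  0 <= Rpower 2 (1-K) * Rpower h (2*H*K) - sigma2_of (R_HK H K) s (s+h)
  <= 9/4 * Rpower h (2*H*K) * Rpower (h/s) (2-2*H*K).
Proof.
  intros HH HK Hs Hh.
  set (x := h/s).
  assert (Hx : 0 < x <= 1).
  { unfold x; split. apply Rdiv_lt_0_compat; lra.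
    apply (Rmult_le_reg_r s); [lra|]. field_simplify; lra. }
  set (u := Rpower (1+x) (2*H)).
  set (b := Rpower s (2*H)).
  assert (Hb : 0 < b) by apply Rp_pos.
  assert (Ht : s + h = s * (1+x)) by (unfold x; field; lra).
  assert (Ha : Rpower (s+h) (2*H) = b * u).
  { rewrite Ht. unfold b, u. rewrite Rpower_mult_distr; lra. }
  unfold sigma2_of. rewrite !Rdiag by lra.
  unfold R_HK.
  rewrite (rpow_pos s), (rpow_pos (s+h)), (rpow_pos 2) by lra.
  replace (Rabs (s - (s+h))) with h by (rewrite Rabs_left by lra; ring).
  rewrite (rpow_pos h) by lra.
  rewrite rpow_pos by (pose proof (Rp_pos s (2*H)); pose proof (Rp_pos (s+h) (2*H)); lra).
  replace (2*H*K) with ((2*H)*K) by ring.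
  rewrite <- (Rpower_mult (s+h) (2*H) K), <- (Rpower_mult s (2*H) K), <- (Rpower_mult h (2*H) K). rewrite Ha. change (Rpower s (2*H)) with b.
  replace (b + b*u) with (b * (1+u)) by ring.
  assert (Hu1 : 1 <= u) by (apply Rp_ge1; lra).
  assert (0 < u) by lra.
  rewrite <- !Rpower_mult_distr by lra.
  set (bK := Rpower b K).
  assert (HbK : 0 < bK) by apply Rp_pos.
  assert (Hc : 2 * Rpower 2 (-K) = Rpower 2 (1-K)).
  { replace (1-K) with (1 + -K) by ring. rewrite Rpower_plus, two_pow1. ring. }
  assert (Eq : Rpower 2 (1 - K) * Rpower (Rpower h (2 * H)) K -
     (bK * Rpower u K + bK - 2 * (Rpower 2 (- K) * (bK * Rpower (1 + u) K - Rpower (Rpower h (2 * H)) K)))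
     = bK * (Rpower 2 (1-K) * Rpower (1+u) K - Rpower u K - 1)).
  { rewrite <- Hc. ring. }
  rewrite Eq.
  destruct (qlem K u HK Hu1) as [Q1 Q2].
  assert (Hu2 : u <= (1+x)^2).
  { unfold u. rewrite <- Rpower_pow by lra. apply Rle_Rpower. lra. simpl; lra. }
  assert (Hu4 : u - 1 <= 3*x) by (assert (x*x <= x*1) by (apply Rmult_le_compat_l; lra); simpl in Hu2; lra).
  assert (Hu3 : (u-1)^2 <= 9 * x^2) by (simpl; assert ((u-1)*(u-1) <= (3*x)*(3*x)) by (apply Rmult_le_compat; lra); lra).
  assert (Id : bK * x^2 = Rpower h (2*H*K) * Rpower x (2-2*H*K)).
  { unfold bK, b. rewrite Rpower_mult.
    replace (2-2*H*K) with (2 + - (2*H*K)) by ring.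
    rewrite Rpower_plus, Rpower_Ropp.
    assert (Hx2 : Rpower x 2 = x^2) by (replace 2 with (INR 2) by (simpl; ring); apply Rpower_pow; lra).
    rewrite Hx2.
    assert (Hm : Rpower x (2*H*K) * Rpower s (2*H*K) = Rpower h (2*H*K)).
    { rewrite Rpower_mult_distr by lra. unfold x. f_equal. field. lra. }
    rewrite <- Hm. replace (2*H*K) with (2*H*K) by ring.
    assert (0 < Rpower x (2*H*K)) by apply Rp_pos.
    field. lra. }
  replace (2*H*K) with ((2*H)*K) in Id by ring.
  rewrite <- Rpower_mult in Id.
  split.
  - apply Rmult_le_pos; lra.
  - assert (bK * (Rpower 2 (1 - K) * Rpower (1 + u) K - Rpower u K - 1) <= bK * ((u-1)^2/4))
      by (apply Rmult_le_compat_l; lra).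
    assert (bK * ((u-1)^2/4) <= bK * (9*x^2/4)) by (apply Rmult_le_compat_l; lra).
    replace (9 / 4 * Rpower (Rpower h (2 * H)) K * Rpower x (2 - 2 * H * K)) with (9/4 * (bK * x^2))
      by (rewrite Id; ring).
    lra.
Qed.

Lemma Rpower_inv_base L e : 0 < L -> Rpower (/L) e = / Rpower L e.
Proof. intros. rewrite <- Rpower_Ropp. unfold Rpower. rewrite ln_Rinv by lra. f_equal; ring. Qed.

Lemma P2sq h g : Rpower h (2*g) = Rpower h g * Rpower h g.
Proof. replace (2*g) with (g+g) by ring. apply Rpower_plus. Qed.

Lemma c_bounds K : 0 < K <= 1 -> 1 <= Rpower 2 (1-K) <= 2.
Proof.
  intros. split. apply Rp_ge1; lra.
  rewrite <- two_pow1 at 2. apply Rle_Rpower; lra.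
Qed.

Lemma unif H K T phi : 0 < H < 1 -> 0 < K <= 1 -> in_Psi T phi -> forall M,
  exists d0, 0 < d0 /\ forall delta, 0 < delta < d0 ->
   M < phi delta / delta /\ 1 < phi delta / delta /\
   forall s h, phi delta <= s -> 0 < h <= delta ->
     0 < s /\
     0 <= Rpower 2 (1-K) * Rpower h (2*H*K) - sigma2_of (R_HK H K) s (s+h)
     <= Rpower 2 (1-K) * Rpower h (2*H*K) * (8 / Rpower (phi delta / delta) (2 - 2*H*K)).
Proof.
  intros HH HK [_ [_ [_ [Hinf _]]]] M.
  destruct (Hinf (Rmax M 1)) as [d [Hd Hd']].
  exists d. split; auto. intros delta Hdel.
  specialize (Hd' delta Hdel).
  assert (HM1 := Rmax_l M 1). assert (HM2 := Rmax_r M 1).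
  set (L := phi delta / delta) in *.
  assert (HL : 1 < L) by lra.
  assert (Hphi : delta < phi delta).
  { unfold L in HL. apply (Rmult_lt_compat_r delta) in HL; [|lra].
    unfold Rdiv in HL. rewrite Rmult_assoc, Rinv_l in HL by lra. lra. }
  split; [lra|split; [lra|]].
  intros s h Hs Hh.
  assert (Hs0 : 0 < s) by lra.
  split; auto.
  destruct (sig2_main H K s h HH HK Hs0 ltac:(lra)) as [G1 G2].
  split; auto.
  assert (He : 0 <= 2 - 2*H*K).
  { assert (H*K <= 1*1) by (apply Rmult_le_compat; lra). lra. }
  assert (Hx : h/s <= /L).
  { unfold L. rewrite Rinv_div. unfold Rdiv.
    apply Rmult_le_compat; try lra. left; apply Rinv_0_lt_compat; lra.
    apply Rinv_le_contravar; lra. }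
  assert (Hxe : Rpower (h/s) (2-2*H*K) <= / Rpower L (2-2*H*K)).
  { rewrite <- Rpower_inv_base by lra. apply Rle_Rpower_l; auto.
    split; auto. apply Rdiv_lt_0_compat; lra. }
  destruct (c_bounds K HK) as [C1 C2].
  assert (HP : 0 < Rpower h (2*H*K)) by apply Rp_pos.
  assert (HPe : 0 < Rpower (h/s) (2-2*H*K)) by apply Rp_pos.
  set (c := Rpower 2 (1-K)) in *. set (P := Rpower h (2*H*K)) in *.
  set (X := Rpower (h/s) (2-2*H*K)) in *.
  unfold Rdiv. unfold Rdiv in G2.
  assert (c * P * (8 * / Rpower L (2-2*H*K)) = 8 * (c * P * / Rpower L (2-2*H*K))) by ring.
  assert (0 <= P * X) by nra.
  assert (P * X <= P * / Rpower L (2-2*H*K)) by (apply Rmult_le_compat_l; lra).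
  assert (P * / Rpower L (2-2*H*K) <= c * P * / Rpower L (2-2*H*K)).
  { apply Rmult_le_compat_r. left; apply Rinv_0_lt_compat, Rp_pos. nra. }
  assert (0 <= c * P * / Rpower L (2-2*H*K)).
  { apply Rmult_le_pos. nra. left; apply Rinv_0_lt_compat, Rp_pos. }
  lra.
Qed.

Lemma near H K T phi : 0 < H < 1 -> 0 < K <= 1 -> in_Psi T phi -> forall eta, 0 < eta <= 1 ->
  exists d0, 0 < d0 /\ forall delta, 0 < delta < d0 ->
   forall s h, phi delta <= s -> 0 < h <= delta ->
     0 < s /\
     (1 - eta) * (Rpower 2 (1-K) * Rpower h (2*H*K)) <= sigma2_of (R_HK H K) s (s+h)
     <= Rpower 2 (1-K) * Rpower h (2*H*K).
Proof.
  intros HH HK Hpsi eta Heta.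
  assert (He : 0 < 2 - 2*H*K).
  { assert (H*K <= H*1) by (apply Rmult_le_compat_l; lra). lra. }
  set (e := 2 - 2*H*K) in *.
  set (M := Rpower (8/eta) (/e)).
  assert (HMe : Rpower M e = 8/eta).
  { unfold M. rewrite Rpower_mult, Rinv_l by lra. apply Rpower_1. apply Rdiv_lt_0_compat; lra. }
  destruct (unif H K T phi HH HK Hpsi M) as [d [Hd Hd']].
  exists d. split; auto. intros delta Hdel s h Hs Hh.
  destruct (Hd' delta Hdel) as [HL1 [HL2 HB]].
  destruct (HB s h Hs Hh) as [Hs0 [G1 G2]]. split; auto.
  fold e in G2.
  assert (Hle : 8 / eta <= Rpower (phi delta / delta) e).
  { rewrite <- HMe. apply Rle_Rpower_l; [lra|]. split; [apply Rp_pos|lra]. }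
  assert (Hq : 8 / Rpower (phi delta / delta) e <= eta).
  { assert (0 < Rpower (phi delta / delta) e) by apply Rp_pos.
    apply (Rmult_le_reg_r (Rpower (phi delta / delta) e)); auto.
    unfold Rdiv. rewrite Rmult_assoc, Rinv_l by lra.
    assert (eta * (8/eta) <= eta * Rpower (phi delta / delta) e) by (apply Rmult_le_compat_l; lra).
    replace (eta * (8/eta)) with 8 in H1 by (field; lra). lra. }
  destruct (c_bounds K HK) as [C1 C2].
  assert (HP : 0 < Rpower h (2*H*K)) by apply Rp_pos.
  assert (Rpower 2 (1 - K) * Rpower h (2 * H * K) * (8 / Rpower (phi delta / delta) e)
     <= Rpower 2 (1 - K) * Rpower h (2 * H * K) * eta) by (apply Rmult_le_compat_l; nra).
  split; nra.
Qed.

Lemma small_pow p e : 0 < p -> 0 < e -> exists d, 0 < d /\ forall h, 0 < h < d -> Rpower h p < e.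
Proof.
  intros Hp He. exists (Rpower e (/p)). split. apply Rp_pos.
  intros h Hh.
  assert (E : Rpower (Rpower e (/p)) p = e) by (rewrite Rpower_mult, Rinv_l by lra; apply Rpower_1; lra).
  rewrite <- E. apply Rlt_Rpower_l; lra.
Qed.

Definition S1 (D : R -> R -> Prop) (F : R -> R -> R) (beta : R) : Prop :=
  0 < beta /\ forall eps, 0 < eps -> exists d, 0 < d /\ forall h, 0 < h < d ->
    forall s, D h s -> Rabs (rpow h beta / F h s) <= eps.
Definition S3 (D : R -> R -> Prop) (F : R -> R -> R) (beta : R) : Prop :=
  0 < beta /\ forall M, exists d, 0 < d /\ forall h, 0 < h < d ->
    forall s, D h s -> M <= rpow h beta / F h s.

Section Gen.
Variables (g : R) (D : R -> R -> Prop) (F : R -> R -> R).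
Hypothesis Hg : 0 < g.
Hypothesis Hb : exists d1, 0 < d1 /\ forall h, 0 < h < d1 -> forall s, D h s ->
   Rpower h g / 2 <= F h s <= 2 * Rpower h g.
Hypothesis Hne : forall d, 0 < d -> exists h, 0 < h < d /\ exists s, D h s.

Lemma gsmall beta : g < beta -> forall eps, 0 < eps -> exists d, 0 < d /\
  forall h, 0 < h < d -> forall s, D h s -> Rabs (rpow h beta / F h s) < eps.
Proof.
  intros Hbg eps He.
  destruct Hb as [d1 [Hd1 Hd1']].
  destruct (small_pow (beta - g) (eps/2) ltac:(lra) ltac:(lra)) as [d2 [Hd2 Hd2']].
  exists (Rmin d1 d2). split. apply Rmin_pos; lra.
  intros h Hh s Hs.
  assert (h < d1) by (pose proof (Rmin_l d1 d2); lra).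
  assert (h < d2) by (pose proof (Rmin_r d1 d2); lra).
  destruct (Hd1' h ltac:(lra) s Hs) as [F1 F2].
  specialize (Hd2' h ltac:(lra)).
  rewrite rpow_pos by lra.
  assert (HP : 0 < Rpower h g) by apply Rp_pos.
  assert (HF : 0 < F h s) by lra.
  assert (Hq : 0 < Rpower h beta / F h s) by (apply Rdiv_lt_0_compat; auto; apply Rp_pos).
  rewrite Rabs_pos_eq by lra.
  replace (Rpower h beta) with (Rpower h (beta - g) * Rpower h g)
    by (rewrite <- Rpower_plus; f_equal; ring).
  apply (Rmult_lt_reg_r (F h s)); auto. unfold Rdiv.
  rewrite Rmult_assoc, Rinv_l by lra. rewrite Rmult_1_r.
  assert (0 < Rpower h (beta - g)) by apply Rp_pos.
  assert (Rpower h (beta - g) * Rpower h g < eps / 2 * Rpower h g)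
    by (apply Rmult_lt_compat_r; auto).
  assert (eps * (Rpower h g / 2) <= eps * F h s) by (apply Rmult_le_compat_l; lra).
  lra.
Qed.

Lemma gbig beta : 0 < beta < g -> forall M, exists d, 0 < d /\
  forall h, 0 < h < d -> forall s, D h s -> M < rpow h beta / F h s.
Proof.
  intros Hbg M.
  destruct Hb as [d1 [Hd1 Hd1']].
  set (M' := Rabs M + 1).
  assert (HM' : 0 < M') by (unfold M'; pose proof (Rabs_pos M); lra).
  destruct (small_pow (g - beta) (/(2*M')) ltac:(lra)) as [d2 [Hd2 Hd2']].
  { apply Rinv_0_lt_compat; lra. }
  exists (Rmin d1 d2). split. apply Rmin_pos; lra.
  intros h Hh s Hs.
  assert (h < d1) by (pose proof (Rmin_l d1 d2); lra).
  assert (h < d2) by (pose proof (Rmin_r d1 d2); lra).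
  destruct (Hd1' h ltac:(lra) s Hs) as [F1 F2].
  specialize (Hd2' h ltac:(lra)).
  rewrite rpow_pos by lra.
  assert (HP : 0 < Rpower h g) by apply Rp_pos.
  assert (HF : 0 < F h s) by lra.
  assert (HQ : 0 < Rpower h (g - beta)) by apply Rp_pos.
  assert (Hgb : Rpower h g = Rpower h (g - beta) * Rpower h beta)
    by (rewrite <- Rpower_plus; f_equal; ring).
  assert (HB : 0 < Rpower h beta) by apply Rp_pos.
  assert (M < M') by (unfold M'; pose proof (Rle_abs M); lra).
  apply Rle_lt_trans with M'; [lra|].
  apply (Rmult_lt_reg_r (F h s)); auto. unfold Rdiv.
  rewrite Rmult_assoc, Rinv_l by lra. rewrite Rmult_1_r.
  (* M' * F <= M' * 2 * Q * B < B *)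
  assert (M' * F h s <= M' * (2 * Rpower h g)) by (apply Rmult_le_compat_l; lra).
  assert (M' * (2 * Rpower h (g-beta)) < M' * (2 * / (2 * M'))).
  { apply Rmult_lt_compat_l; lra. }
  replace (M' * (2 * / (2 * M'))) with 1 in H3 by (field; lra).
  rewrite Hgb in H2.
  assert (M' * (2 * Rpower h (g - beta)) * Rpower h beta < 1 * Rpower h beta)
    by (apply Rmult_lt_compat_r; auto).
  lra.
Qed.

Lemma glb1 : is_glb (S1 D F) g.
Proof.
  split.
  - intros beta [Hb0 HS]. destruct (Rlt_le_dec beta g) as [Hlt|]; [|auto].
    exfalso. destruct (gbig beta ltac:(lra) 1) as [d' [Hd' Hd'']].
    destruct (HS (/2) ltac:(lra)) as [d [Hd Hd2]].
    destruct (Hne (Rmin d d') (Rmin_pos _ _ Hd Hd')) as [h [Hh [s Hs]]].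
    assert (h < d) by (pose proof (Rmin_l d d'); lra).
    assert (h < d') by (pose proof (Rmin_r d d'); lra).
    specialize (Hd2 h ltac:(lra) s Hs). specialize (Hd'' h ltac:(lra) s Hs).
    pose proof (Rle_abs (rpow h beta / F h s)). lra.
  - intros b Hlb. destruct (Rle_dec b g) as [|Hn]; auto. exfalso.
    assert (S1 D F ((b+g)/2)).
    { split. lra. intros eps He. destruct (gsmall ((b+g)/2) ltac:(lra) eps He) as [d [Hd Hd']].
      exists d. split; auto. intros. left; auto. }
    specialize (Hlb _ H). lra.
Qed.

Lemma lub3 : is_lub (S3 D F) g.
Proof.
  split.
  - intros beta [Hb0 HS]. destruct (Rlt_le_dec g beta) as [Hlt|]; [|auto].
    exfalso. destruct (gsmall beta Hlt 1 ltac:(lra)) as [d' [Hd' Hd'']].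
    destruct (HS 1) as [d [Hd Hd2]].
    destruct (Hne (Rmin d d') (Rmin_pos _ _ Hd Hd')) as [h [Hh [s Hs]]].
    assert (h < d) by (pose proof (Rmin_l d d'); lra).
    assert (h < d') by (pose proof (Rmin_r d d'); lra).
    specialize (Hd2 h ltac:(lra) s Hs). specialize (Hd'' h ltac:(lra) s Hs).
    pose proof (Rle_abs (rpow h beta / F h s)). lra.
  - intros b Hub. destruct (Rle_dec g b) as [|Hn]; auto. exfalso.
    set (beta := (Rmax b 0 + g)/2).
    assert (Hm1 := Rmax_l b 0). assert (Hm2 := Rmax_r b 0).
    assert (Hm3 : Rmax b 0 < g) by (unfold Rmax; destruct (Rle_dec b 0); lra).
    assert (S3 D F beta).
    { split. unfold beta; lra. intros M. destruct (gbig beta ltac:(unfold beta; lra) M) as [d [Hd Hd']].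
      exists d. split; auto. intros. left; auto. }
    specialize (Hub _ H). unfold beta in Hub. lra.
Qed.
End Gen.

Lemma sqrt_bounds P A : 0 < P -> P*P/4 <= A <= 4*(P*P) -> P/2 <= sqrt A <= 2*P.
Proof.
  intros HP HA. split.
  - replace (P/2) with (sqrt ((P/2)*(P/2))) by (apply sqrt_square; lra).
    apply sqrt_le_1_alt. lra.
  - replace (2*P) with (sqrt ((2*P)*(2*P))) by (apply sqrt_square; lra).
    apply sqrt_le_1_alt. lra.
Qed.

Lemma ratio_lem A B eta : 0 < B -> 0 <= eta <= 1 -> (1-eta)*B <= A <= B ->
  Rabs (sqrt A / sqrt B - 1) <= eta.
Proof.
  intros HB He HA.
  assert (HsB : 0 < sqrt B) by (apply sqrt_lt_R0; lra).
  assert (U : sqrt A <= sqrt B) by (apply sqrt_le_1_alt; lra).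
  assert (L : (1-eta) * sqrt B <= sqrt A).
  { replace ((1-eta) * sqrt B) with (sqrt (((1-eta)*(1-eta))*B)).
    apply sqrt_le_1_alt. assert ((1-eta)*(1-eta) <= (1-eta)*1) by (apply Rmult_le_compat_l; lra).
    nra.
    rewrite sqrt_mult_alt by nra. rewrite sqrt_square by lra. auto. }
  assert (R1 : sqrt A / sqrt B <= 1).
  { apply (Rmult_le_reg_r (sqrt B)); auto. unfold Rdiv. rewrite Rmult_assoc, Rinv_l by lra. lra. }
  assert (R2 : 1 - eta <= sqrt A / sqrt B).
  { apply (Rmult_le_reg_r (sqrt B)); auto. unfold Rdiv. rewrite Rmult_assoc, Rinv_l by lra. lra. }
  rewrite Rabs_left1 by lra. lra.
Qed.

Lemma glb_ext S S' g : (forall b, S b <-> S' b) -> is_glb S g -> is_glb S' g.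
Proof.
  intros E [H1 H2]. split.
  - intros x Hx. apply H1, E, Hx.
  - intros b Hb. apply H2. intros x Hx. apply Hb, E, Hx.
Qed.

Lemma lub_ext S S' g : (forall b, S b <-> S' b) -> is_lub S g -> is_lub S' g.
Proof.
  intros E [H1 H2]. split.
  - intros x Hx. apply H1, E, Hx.
  - intros b Hb. apply H2. intros x Hx. apply Hb, E, Hx.
Qed.

Lemma sig_0 H K h : 0 < h -> sigma_of (R_HK H K) 0 h = Rpower h (H*K).
Proof.
  intros. unfold sigma_of. rewrite sig2_0 by auto.
  replace (2*H*K) with (2*(H*K)) by ring. rewrite P2sq.
  apply sqrt_square. left; apply Rp_pos.
Qed.

Theorem mainTheorem13 (H K T : R) (hH : 0 < H < 1) (hK : 0 < K <= 1) (hT : 0 < T) :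
  cond_C1 (sigma_of (R_HK H K)) (H * K) /\
  C2_kappa T (sigma_of (R_HK H K)) (H * K) (rpow 2 ((1 - K) / 2)) /\
  (forall phi, in_Psi T phi ->
     exists d0, 0 < d0 /\ forall delta, 0 < delta < d0 ->
       forall s h, phi delta <= s <= T - delta -> 0 < h <= delta ->
         Rabs (sigma2_of (R_HK H K) s (s + h) / (rpow 2 (1 - K) * rpow h (2 * H * K)) - 1)
           <= 8 / rpow (phi delta / delta) (2 - 2 * H * K)) /\
  has_Orey_index T (sigma_of (R_HK H K)) (H * K).
Proof.
  assert (Hg : 0 < H * K) by (apply Rmult_lt_0_compat; lra).
  assert (Hc2 : Rpower 2 (1-K) = Rpower 2 ((1-K)/2) * Rpower 2 ((1-K)/2)).
  { rewrite <- P2sq. f_equal. field. }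
  destruct (c_bounds K hK) as [C1 C2].
  split; [|split; [|split]].
  -
    exists 1, 1. split; [lra|]. intros delta Hd.
    rewrite sig_0 by lra. rewrite rpow_pos by lra.
    rewrite Rabs_pos_eq by (left; apply Rp_pos). lra.
  -
    split. rewrite rpow_pos by lra. apply Rp_pos.
    intros phi Hpsi eps Heps.
    destruct (near H K T phi hH hK Hpsi (Rmin eps 1)) as [d [Hd Hd']].
    { split. apply Rmin_pos; lra. apply Rmin_r. }
    exists d. split; auto. intros delta Hdel t h Ht Hh.
    destruct (Hd' delta Hdel t h ltac:(lra) Hh) as [Ht0 [A1 A2]].
    rewrite !rpow_pos by lra.
    assert (E : Rpower 2 ((1 - K) / 2) * Rpower h (H * K)
                = sqrt (Rpower 2 (1-K) * Rpower h (2*H*K))).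
    { replace (2*H*K) with (2*(H*K)) by ring. rewrite P2sq, Hc2.
      replace (Rpower 2 ((1 - K) / 2) * Rpower 2 ((1 - K) / 2) *
                (Rpower h (H * K) * Rpower h (H * K))) with
        ((Rpower 2 ((1 - K) / 2) * Rpower h (H * K)) * (Rpower 2 ((1 - K) / 2) * Rpower h (H * K)))
        by ring.
      rewrite sqrt_square; auto. left; apply Rmult_lt_0_compat; apply Rp_pos. }
    rewrite E. unfold sigma_of.
    assert (HP : 0 < Rpower h (2*H*K)) by apply Rp_pos.
    assert (HcP : 0 < Rpower 2 (1 - K) * Rpower h (2 * H * K)) by (apply Rmult_lt_0_compat; lra).
    apply Rle_trans with (Rmin eps 1); [|apply Rmin_l].
    apply ratio_lem; auto. split. left; apply Rmin_pos; lra. apply Rmin_r.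
  -
    intros phi Hpsi.
    destruct (unif H K T phi hH hK Hpsi 0) as [d [Hd Hd']].
    exists d. split; auto. intros delta Hdel s h Hs Hh.
    destruct (Hd' delta Hdel) as [_ [HL HB]].
    destruct (HB s h ltac:(lra) Hh) as [Hs0 [G1 G2]].
    rewrite !rpow_pos by lra.
    assert (HP : 0 < Rpower h (2*H*K)) by apply Rp_pos.
    set (cP := Rpower 2 (1 - K) * Rpower h (2 * H * K)) in *.
    assert (HcP : 0 < cP) by (unfold cP; nra).
    set (A := sigma2_of (R_HK H K) s (s + h)) in *.
    replace (A / cP - 1) with (- ((cP - A) / cP)) by (field; lra).
    rewrite Rabs_Ropp, Rabs_pos_eq by (unfold Rdiv; apply Rmult_le_pos; [lra| left; apply Rinv_0_lt_compat; lra]).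
    apply (Rmult_le_reg_r cP); auto. unfold Rdiv at 1. rewrite Rmult_assoc, Rinv_l by lra. lra.
  -
    intros phi Hpsi.
    assert (Hb0 : exists d1, 0 < d1 /\ forall h, 0 < h < d1 -> forall s, (fun h s => s = 0) h s ->
       Rpower h (H*K) / 2 <= (fun h s => sigma_of (R_HK H K) 0 h) h s <= 2 * Rpower h (H*K)).
    { exists 1. split; [lra|]. intros h Hh s _. simpl. rewrite sig_0 by lra.
      pose proof (Rp_pos h (H*K)). lra. }
    assert (Hne0 : forall d, 0 < d -> exists h, 0 < h < d /\ exists s, (fun h s => s = 0) h s).
    { intros d Hd. exists (d/2). split. lra. exists 0. reflexivity. }
    assert (Hb1 : exists d1, 0 < d1 /\ forall h, 0 < h < d1 -> forall s,
       (fun h s => phi h <= s <= T - h) h s ->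
       Rpower h (H*K) / 2 <= (fun h s => sigma_of (R_HK H K) s (s+h)) h s <= 2 * Rpower h (H*K)).
    { destruct (near H K T phi hH hK Hpsi (/2)) as [d [Hd Hd']]. lra.
      exists d. split; auto. intros h Hh s Hs. simpl.
      destruct (Hd' h Hh s h ltac:(lra) ltac:(lra)) as [_ [A1 A2]].
      unfold sigma_of. apply sqrt_bounds. apply Rp_pos.
      replace (2*H*K) with (2*(H*K)) in A1, A2 by ring. rewrite P2sq in A1, A2.
      assert (0 < Rpower h (H*K) * Rpower h (H*K)) by (apply Rmult_lt_0_compat; apply Rp_pos).
      split; nra. }
    assert (Hne1 : forall d, 0 < d -> exists h, 0 < h < d /\ exists s, (fun h s => phi h <= s <= T - h) h s).
    { intros d Hd. destruct Hpsi as [_ [_ [Hl0 _]]].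
      destruct (Hl0 (T/2) ltac:(lra)) as [d' [Hd' Hd'']].
      set (h := Rmin d (Rmin d' T) / 2).
      assert (Hm1 := Rmin_l d (Rmin d' T)). assert (Hm2 := Rmin_r d (Rmin d' T)).
      assert (Hm3 := Rmin_l d' T). assert (Hm4 := Rmin_r d' T).
      assert (Hm5 : 0 < Rmin d (Rmin d' T)) by (apply Rmin_pos; [lra| apply Rmin_pos; lra]).
      exists h. split. unfold h; lra. exists (phi h). simpl.
      specialize (Hd'' h ltac:(unfold h; lra)). rewrite Rminus_0_r in Hd''.
      pose proof (Rle_abs (phi h)). unfold h in *; lra. }
    split; [|split; [|split]].
    + exact (glb1 (H*K) _ _ Hg Hb1 Hne1).
    + apply (glb_ext (S1 (fun h s => s = 0) (fun h s => sigma_of (R_HK H K) 0 h))).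
      2: exact (glb1 (H*K) _ _ Hg Hb0 Hne0).
      intros b. split.
      * intros [Hb HS]. split; auto. intros eps He.
        destruct (HS (eps/2) ltac:(lra)) as [d [Hd Hd']]. exists d. split; auto.
        intros h Hh. rewrite Rminus_0_r. specialize (Hd' h Hh 0 eq_refl). simpl in Hd'. lra.
      * intros [Hb HS]. split; auto. intros eps He.
        destruct (HS eps He) as [d [Hd Hd']]. exists d. split; auto.
        intros h Hh s Hs. simpl in Hs. subst s. specialize (Hd' h Hh). rewrite Rminus_0_r in Hd'. simpl. lra.
    + exact (lub3 (H*K) _ _ Hg Hb1 Hne1).
    + apply (lub_ext (S3 (fun h s => s = 0) (fun h s => sigma_of (R_HK H K) 0 h))).
      2: exact (lub3 (H*K) _ _ Hg Hb0 Hne0).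
      intros b. split.
      * intros [Hb HS]. split; auto. intros M.
        destruct (HS (M+1)) as [d [Hd Hd']]. exists d. split; auto.
        intros h Hh. specialize (Hd' h Hh 0 eq_refl). simpl in Hd'. lra.
      * intros [Hb HS]. split; auto. intros M.
        destruct (HS M) as [d [Hd Hd']]. exists d. split; auto.
        intros h Hh s Hs. simpl in Hs. subst s. specialize (Hd' h Hh). simpl. lra.
Qed.
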